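(* Let $q>0$, $R>0$. For $(\eta,\sigma)\in\mathbb{R}^2$ let $(\varphi,\tilde\varphi)$ solve on $[0,R]$ $$d\varphi=\tilde\varphi\,dx,\qquad d\tilde\varphi=(\eta^2-q)\varphi\,dx-\sigma\varphi\,dW_x,\qquad\varphi(0)=1,\ \tilde\varphi(0)=\eta,$$ and set $F(\eta,\sigma):=\tilde\varphi(R)+\eta\varphi(R)$. If $\eta_0\in(0,\sqrt q)$ satisfies $F(\eta_0,0)=0$, then $\partial_\eta F(\eta_0,0)\neq0$; explicitly, with $c_0=\sqrt{q-\eta_0^2}$, $$\partial_\eta F(\eta_0,0)=\cos(c_0R)\Big[2+\eta_0R-\frac{\eta_0^3R}{c_0^2}\Big]+\sin(c_0R)\Big[\frac{3\eta_0+2\eta_0^2R}{c_0}+\frac{\eta_0^3}{c_0^3}\Big]\neq0 .$$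
   Context: $W$ is a standard real Brownian motion. At $\sigma=0$, $\varphi(x)=\cos(cx)+\frac{\eta}{c}\sin(cx)$ with $c=\sqrt{q-\eta^2}$; zeros $\eta_0\in(0,\sqrt q)$ of $F(\cdot,0)$ are the soliton parameters of the KdV equation $\partial_tU+6U\partial_xU+\partial_x^3U=0$ with initial datum $q\mathbf{1}_{[0,R]}$ (eigenvalues $\zeta=i\eta_0$ of $\varphi''+(U_0+\zeta^2)\varphi=0$). *)

(* Defs.v *)
From Stdlib Require Import Reals Lra.
Open Scope R_scope.

(* The deterministic (sigma = 0) linear system
     phi' = dphi,  dphi' = (eta^2 - q) phi,  phi(0) = 1, dphi(0) = eta
   for a family of solutions indexed by eta.  phi eta x, dphi eta x. *)
Definition is_sigma0_solution (q : R) (phi dphi : R -> R -> R) : Prop :=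
  forall eta : R,
    phi eta 0 = 1 /\ dphi eta 0 = eta /\
    (forall x : R, derivable_pt_lim (phi eta) x (dphi eta x)) /\
    (forall x : R, derivable_pt_lim (dphi eta) x ((eta ^ 2 - q) * phi eta x)).

Definition F0 (R0 : R) (phi dphi : R -> R -> R) (eta : R) : R :=
  dphi eta R0 + eta * phi eta R0.

Definition dF_explicit (q R0 eta0 : R) : R :=
  let c0 := sqrt (q - eta0 ^ 2) in
  cos (c0 * R0) * (2 + eta0 * R0 - eta0 ^ 3 * R0 / c0 ^ 2)
  + sin (c0 * R0) * ((3 * eta0 + 2 * eta0 ^ 2 * R0) / c0 + eta0 ^ 3 / c0 ^ 3).

(* Main.v *)
Require Import Defs.
From Stdlib Require Import Reals Lra.
From Coquelicot Require Import Coquelicot.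
Open Scope R_scope.

Lemma closed_form (q : R) (phi dphi : R -> R -> R) (hsol : is_sigma0_solution q phi dphi)
  (eta : R) (he : eta ^ 2 < q) (x : R) :
  let c := sqrt (q - eta ^ 2) in
  phi eta x = cos (c * x) + eta / c * sin (c * x) /\
  dphi eta x = - c * sin (c * x) + eta * cos (c * x).
Proof.
  intros c.
  assert (hc : 0 < c) by (apply sqrt_lt_R0; lra).
  assert (hc2 : c * c = q - eta ^ 2) by (apply sqrt_sqrt; lra).
  destruct (hsol eta) as [h0 [h0' [hd hd']]].
  set (g := fun x => cos (c * x) + eta / c * sin (c * x)).
  set (g' := fun x => - c * sin (c * x) + eta * cos (c * x)).
  assert (Hg : forall x, derivable_pt_lim g x (g' x)).
  { intro y. apply is_derive_Reals. unfold g, g'. auto_derive; auto. field. lra. }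
  assert (Hg' : forall x, derivable_pt_lim g' x ((eta^2 - q) * g x)).
  { intro y. apply is_derive_Reals. unfold g, g'. auto_derive; auto.
    replace (eta^2 - q) with (- (c*c)) by lra. field. lra. }
  set (u := fun x => phi eta x - g x).
  set (v := fun x => dphi eta x - g' x).
  set (k := eta ^ 2 - q).
  set (E := fun x => v x * v x - k * (u x * u x)).
  assert (HE : forall x, derivable_pt_lim E x 0).
  { intro y.
    assert (Hu : derivable_pt_lim u y (v y)) by (apply derivable_pt_lim_minus; auto).
    assert (Hv : derivable_pt_lim v y (k * u y)).
    { unfold v, u. replace (k * (phi eta y - g y)) with ((eta^2-q) * phi eta y - (eta^2-q) * g y)
        by (unfold k; ring).
      apply derivable_pt_lim_minus; auto. }
    unfold E.
    replace 0 with ((k*u y * v y + v y*(k*u y)) - k*(v y * u y + u y * v y)) by ring.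
    apply (derivable_pt_lim_minus (fun t => v t * v t) (fun t => k * (u t * u t))).
    - apply (derivable_pt_lim_mult v v); auto.
    - apply (derivable_pt_lim_scal (fun t => u t * u t)).
      apply (derivable_pt_lim_mult u u); auto. }
  assert (pr : derivable E).
  { intro y. exists 0. apply HE. }
  assert (Hc : constant E).
  { apply (null_derivative_1 E (fun y => exist _ 0 (HE y))). intro; reflexivity. }
  assert (E0 : E 0 = 0).
  { unfold E, u, v, g, g'. rewrite h0, h0', !Rmult_0_r, cos_0, sin_0. ring. }
  assert (Ex : E x = 0) by (rewrite (Hc x 0); exact E0).
  unfold E in Ex.
  assert (hk : k < 0) by (unfold k; lra).
  assert (hu2 : 0 <= - k * (u x * u x)) by (apply Rmult_le_pos; nra).
  assert (hv2 : 0 <= v x * v x) by nra.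
  assert (hu : u x = 0).
  { assert (u x * u x = 0) by nra. destruct (Rmult_integral _ _ H); auto. }
  assert (hv : v x = 0).
  { assert (v x * v x = 0) by nra. destruct (Rmult_integral _ _ H); auto. }
  unfold u, v, g, g' in hu, hv. split; lra.
Qed.

Theorem mainTheorem11 (q R0 : R) (hq : 0 < q) (hR : 0 < R0)
  (phi dphi : R -> R -> R) (hsol : is_sigma0_solution q phi dphi)
  (eta0 : R) (h0 : 0 < eta0) (h1 : eta0 < sqrt q)
  (hF : F0 R0 phi dphi eta0 = 0) :
  derivable_pt_lim (F0 R0 phi dphi) eta0 (dF_explicit q R0 eta0) /\
  dF_explicit q R0 eta0 <> 0.
Proof.
  assert (hsq : 0 < sqrt q) by (apply sqrt_lt_R0; lra).
  assert (hsq2 : sqrt q * sqrt q = q) by (apply sqrt_sqrt; lra).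
  assert (he0 : eta0 ^ 2 < q) by nra.
  set (c := sqrt (q - eta0 ^ 2)).
  assert (hc : 0 < c) by (apply sqrt_lt_R0; lra).
  assert (hc2 : c * c = q - eta0 ^ 2) by (apply sqrt_sqrt; lra).
  split.
  - set (G := fun eta => let c := sqrt (q - eta ^ 2) in
        (- c * sin (c * R0) + eta * cos (c * R0)) + eta * (cos (c * R0) + eta / c * sin (c * R0))).
    apply is_derive_Reals.
    apply is_derive_ext_loc with G.
    { assert (hd : 0 < sqrt q - eta0) by lra.
      exists (mkposreal _ hd). intros y hy.
      unfold ball in hy; simpl in hy; unfold AbsRing_ball, abs, minus, plus, opp in hy; simpl in hy.
      assert (hy2 : y ^ 2 < q).
      { apply Rabs_def2 in hy. nra. }
      unfold G, F0. destruct (closed_form q phi dphi hsol y hy2 R0) as [A B].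
      rewrite A, B. reflexivity. }
    unfold G, dF_explicit. fold c.
    auto_derive;
      replace (q + - (eta0 * (eta0 * 1))) with (q - eta0 ^ 2) by ring; fold c.
    + repeat split; lra.
    + field. lra.
  - destruct (closed_form q phi dphi hsol eta0 he0 R0) as [A B].
    fold c in A, B. unfold F0 in hF. rewrite A, B in hF.
    set (co := cos (c * R0)) in *. set (s := sin (c * R0)) in *.
    set (e := eta0) in *.
    assert (L1 : 2 * e * c * co - (c * c - e * e) * s = 0).
    { replace (2 * e * c * co - (c * c - e * e) * s)
        with (c * (- c * s + e * co + e * (co + e / c * s))) by (field; lra).
      rewrite hF; ring. }
    intro HA. unfold dF_explicit in HA. fold c in HA. fold co s e in HA.
    set (a := (2 + e * R0) * c^3 - e^3 * R0 * c).
    set (b := (3 * e + 2 * e^2 * R0) * c^2 + e^3).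
    assert (L2 : a * co + b * s = 0).
    { replace (a * co + b * s) with (c^3 * (co * (2 + e * R0 - e ^ 3 * R0 / c ^ 2) +
        s * ((3 * e + 2 * e ^ 2 * R0) / c + e ^ 3 / c ^ 3))) by (unfold a, b; field; lra).
      rewrite HA; ring. }
    set (det := c * (c^2 + e^2)^2 * (2 + e * R0)).
    assert (hdet : 0 < det).
    { unfold det. apply Rmult_lt_0_compat; [apply Rmult_lt_0_compat|]; try nra; apply pow_lt; nra.
      }
    assert (Hco : co * det = 0).
    { replace (co * det) with (b * (2 * e * c * co - (c * c - e * e) * s) + (c*c - e*e) * (a * co + b * s))
        by (unfold det, a, b; ring).
      rewrite L1, L2; ring. }
    assert (Hs : s * det = 0).
    { replace (s * det) with (2 * e * c * (a * co + b * s) - a * (2 * e * c * co - (c * c - e * e) * s))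
        by (unfold det, a, b; ring).
      rewrite L1, L2; ring. }
    assert (co = 0) by (destruct (Rmult_integral _ _ Hco); lra).
    assert (s = 0) by (destruct (Rmult_integral _ _ Hs); lra).
    pose proof (sin2_cos2 (c * R0)). fold co s in H1. unfold Rsqr in H1. nra.
Qed.
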